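(* Let $H=(V,E)$ be an $n$-vertex undirected multigraph without self-loops and with minimum degree at least $3$. Let $\gamma\ge 1$, let $\Sigma$ be a set, and suppose each edge $e\in E$ is assigned a set $w_e\subseteq\Sigma$ with $|w_e|\le\gamma$, such that every element of $\Sigma$ belongs to at most $\gamma$ of the sets $w_e$. Let $\beta=\lceil\log_{3/2}(12\gamma^2)\rceil$. Then there exist a subgraph $H_0=(V_0,E_0)$ of $H$ and a path decomposition $(B_i)_{i=1}^q$ of $H_0$ of width at most $4(\beta+3)$ such that: (a) $|E_0|=|V_0|+1$; (b) $|V_0|\le 4(\log_{3/2}n+2)$; (c) for every pair of edges $e_1,e_2\in E_0$ with $w_{e_1}\cap w_{e_2}\neq\emptyset$ there is an index $i$ such that all endpoints of $e_1$ and of $e_2$ lie in $B_i$; (d) for every edge $uv\in E_0$ the set of indices $\{i: u,v\in B_i\}$ is an interval.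
   Context: A path decomposition of a graph $G$ is a sequence of vertex subsets (bags) $B_1,\dots,B_q$ whose union is $V(G)$, such that every edge has both endpoints in some bag and, for each vertex $v$, the indices of bags containing $v$ form an interval; its width is the maximum bag size minus one. Parallel edges are allowed in $H$. *)

(* Defs.v *)
From mathcomp Require Import all_boot.
Set Implicit Arguments. Unset Strict Implicit. Unset Printing Implicit Defensive.

(* A multigraph without self-loops: vertex type V, edge type E (parallel edges
   allowed), each edge e has two distinct endpoints (ends e).1, (ends e).2. *)
Definition loopless (V E : finType) (ends : E -> V * V) : Prop :=
  forall e, (ends e).1 != (ends e).2.

Definition incident (V E : finType) (ends : E -> V * V) (v : V) (e : E) : bool :=
  ((ends e).1 == v) || ((ends e).2 == v).

Definition degree (V E : finType) (ends : E -> V * V) (v : V) : nat :=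
  #|[set e | incident ends v e]|.

Definition is_subgraph (V E : finType) (ends : E -> V * V)
    (V0 : {set V}) (E0 : {set E}) : Prop :=
  forall e, e \in E0 -> ((ends e).1 \in V0) && ((ends e).2 \in V0).

Definition indices_interval (V : finType) (B : seq {set V}) (S : {set V}) : Prop :=
  forall i j k, i <= j -> j <= k -> k < size B ->
    S \subset nth set0 B i -> S \subset nth set0 B k -> S \subset nth set0 B j.

Definition path_decomposition (V E : finType) (ends : E -> V * V)
    (V0 : {set V}) (E0 : {set E}) (B : seq {set V}) : Prop :=
  [/\ \bigcup_(b <- B) b = V0,
      (forall e, e \in E0 -> exists2 b, b \in B &
          ((ends e).1 \in b) && ((ends e).2 \in b)) &
      (forall v, v \in V0 -> indices_interval B [set v])].

Definition width_at_most (V : finType) (B : seq {set V}) (w : nat) : Prop :=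
  forall b, b \in B -> #|b| <= w.+1.

Definition edge_ends_set (V E : finType) (ends : E -> V * V) (e : E) : {set V} :=
  [set (ends e).1; (ends e).2].

(* Main.v *)
Require Import Defs.
From mathcomp Require Import all_boot zify.
Set Implicit Arguments. Unset Strict Implicit. Unset Printing Implicit Defensive.

Lemma card_bigcup_le (T I : finType) (A : {pred I}) (F : I -> {set T}) :
  #|\bigcup_(i in A) F i| <= \sum_(i in A) #|F i|.
Proof.
apply: (big_rec2 (fun (X : {set T}) n => #|X| <= n)); first by rewrite cards0.
move=> i X n _ H; apply: leq_trans (leq_card_setU _ _) _; by rewrite leq_add2l.
Qed.

Lemma card_pairs_ge (T U : finType) (X : {set T * U}) (L : {set T}) k :
  (forall v, v \in L -> k <= #|[set p in X | p.1 == v]|) -> #|L| * k <= #|X|.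
Proof.
move=> H.
have -> : #|X| = \sum_(v : T) #|[set p in X | p.1 == v]|.
  rewrite -sum1_card (partition_big (fun p : T * U => p.1) predT) //=.
  apply: eq_bigr => v _; rewrite -sum1_card; apply: eq_bigl => p; by rewrite inE.
rewrite -sum_nat_const [X in _ <= X](bigID (fun v => v \in L)) /=.
apply: leq_trans (leq_addr _ _); exact: leq_sum.
Qed.

Lemma exp32_mono K K' : K <= K' -> 3 ^ K * 2 ^ K' <= 3 ^ K' * 2 ^ K.
Proof.
move=> h; rewrite -(subnKC h) !expnD.
have : 2 ^ (K' - K) <= 3 ^ (K' - K) by elim: (K' - K) => // n IH; rewrite !expnS leq_mul.
move: (3 ^ K) (2 ^ K) (2 ^ (K'-K)) (3 ^ (K'-K)) => a b c e hce.
rewrite mulnA [a * e * b]mulnAC; apply: leq_mul => //; exact: leq_mul.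
Qed.

Lemma beta_ge7 b : 12 * 2 ^ b <= 3 ^ b -> 7 <= b.
Proof. by do 7 (case: b => [|b] //). Qed.

Lemma pow15 d : 7 <= d -> 15 * 2 ^ d < 3 ^ d.
Proof.
elim: d => // d IH; rewrite leq_eqVlt => /orP [/eqP <- // | h].
have := IH h; rewrite !expnS => h2.
have : 2 * 2 ^ d <= 3 * 2 ^ d by rewrite leq_mul2r orbT.
lia.
Qed.

Lemma n_lt_pow n : 0 < n -> 2 ^ n * n < 3 ^ n.
Proof.
move=> n0.
suff H : 9 * (2 ^ n * n) <= 8 * 3 ^ n.
  have : 0 < 3 ^ n by rewrite expn_gt0.
  lia.
elim: n n0 => // n IH _.
case: n IH => [|n] IH //.
case: n IH => [|n] IH //.
have := IH isT; rewrite !expnS.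
move: (2 ^ n) (3 ^ n) => x y h.
nia.
Qed.

Section Basic.
Variables (V E : finType) (ends : E -> V * V).
Hypothesis hloop : loopless ends.

Definition other (e : E) (x : V) : V :=
  if (ends e).1 == x then (ends e).2 else (ends e).1.

Lemma incidentE x e : incident ends x e = (x \in edge_ends_set ends e).
Proof. by rewrite /incident /edge_ends_set !inE ![_ == x]eq_sym. Qed.

Lemma other_inc e x : incident ends x e -> incident ends (other e x) e.
Proof. by rewrite /incident /other; case: eqP => _; rewrite eqxx ?orbT. Qed.

Lemma other_neq e x : incident ends x e -> other e x != x.
Proof.
have hne := hloop e; rewrite /incident /other.
case/orP => /eqP <-; first by rewrite eqxx eq_sym.
by rewrite (negbTE hne).
Qed.

Lemma other_invol e x : incident ends x e -> other e (other e x) = x.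
Proof.
have hne := hloop e; rewrite /incident /other.
case/orP => /eqP <-; first by rewrite eqxx (negbTE hne).
by rewrite (negbTE hne) eqxx.
Qed.

Lemma inc_two e x y : incident ends x e -> incident ends y e -> x != y -> y = other e x.
Proof.
rewrite /incident /other => hx hy hxy.
have hne := hloop e.
case/orP: hx hxy => /eqP <- hxy; case/orP: hy => /eqP hy; subst y.
- by rewrite eqxx in hxy.
- by rewrite eqxx.
- by rewrite (negbTE hne).
- by rewrite eqxx in hxy.
Qed.

Lemma card_inc_le2 e (P : pred V) : #|[set y | incident ends y e & P y]| <= 2.
Proof.
apply: leq_trans (_ : #|edge_ends_set ends e| <= 2).
  apply: subset_leq_card; apply/subsetP => y; rewrite inE -incidentE; by case/andP.
rewrite /edge_ends_set cardsU !cards1; exact: leq_subr.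
Qed.

Lemma inc_ends1 e : incident ends (ends e).1 e.
Proof. by rewrite /incident eqxx. Qed.
Lemma inc_ends2 e : incident ends (ends e).2 e.
Proof. by rewrite /incident eqxx orbT. Qed.

End Basic.

Lemma bound_b K d n : K <= 4 * d.+2 -> 3 ^ d <= 2 ^ d * n ->
  3 ^ K * 2 ^ 8 <= 3 ^ 8 * 2 ^ K * n ^ 4.
Proof.
move=> hK hd.
have hK' : K <= d * 4 + 8 by lia.
have hm := exp32_mono hK'.
rewrite !expnD !expnM in hm.
have hq : (3 ^ d) ^ 4 <= (2 ^ d * n) ^ 4 by rewrite leq_exp2r.
rewrite expnMn in hq.
have hP : 0 < (2 ^ d) ^ 4 by rewrite !expn_gt0.
move: hm hq hP; move: (3 ^ K) (2 ^ K) ((2 ^ d) ^ 4) ((3 ^ d) ^ 4) (n ^ 4) => A B P Q N hm hq hP.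
rewrite -(leq_pmul2l hP).
have h2 : Q * (3 ^ 8 * B) <= P * N * (3 ^ 8 * B) by rewrite leq_mul2r hq orbT.
move: hm h2; rewrite !expnS expn0; nia.
Qed.

Lemma card_bigcup_seq_le (T : finType) (I : Type) (l : seq I) (F : I -> {set T}) :
  #|\bigcup_(i <- l) F i| <= \sum_(i <- l) #|F i|.
Proof.
apply: (big_rec2 (fun (X : {set T}) n => #|X| <= n)); first by rewrite cards0.
move=> i X n _ H; apply: leq_trans (leq_card_setU _ _) _; by rewrite leq_add2l.
Qed.

Lemma arith_I7 X Y T R R' a N : X * T + Y * R <= Y * (3 * a) -> 3 * a + R' <= 2 * N + R ->
  3 * X * T + 2 * Y * R' <= 2 * Y * (3 * N).
Proof. move=> h1 h2. have h3 : Y * (3 * a + R') <= Y * (2 * N + R) by rewrite leq_mul2l h2 orbT. nia. Qed.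

Lemma arith_I8 X Y T N : X <= Y * T -> T <= 2 * N -> 3 * X <= 2 * Y * (T + N).
Proof. move=> h1 h2. have h3 : Y * T <= Y * (2 * N) by rewrite leq_mul2l h2 orbT. nia. Qed.

Lemma arith_phase2 a T Bd Rs g b d : 12 * g ^ 2 * 2 ^ b <= 3 ^ b -> 0 < g -> b.+1 <= d ->
  3 ^ (b.+1) * T <= 2 ^ (b.+1) * (3 * a) -> Bd <= g ^ 2 * T -> 3 ^ d <= 2 ^ d * (3 * a) ->
  Rs <= 2 -> Rs + 4 * Bd <= a.
Proof.
move=> hb hg hd h1 h2 h3 hR.
have b7 : 7 <= b.
  apply: beta_ge7; apply: leq_trans hb; rewrite leq_mul2r; apply/orP; right.
  by rewrite -{1}(muln1 12) leq_mul2l expn_gt0 hg.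
have ha : 6 <= a.
  rewrite leqNgt; apply/negP => ha.
  have := pow15 (leq_trans b7 (ltnW hd)); rewrite ltnNge => /negP; apply.
  apply: leq_trans h3 _; rewrite mulnC leq_mul2r; apply/orP; right; lia.
have key : 3 ^ b * (12 * (g ^ 2 * T)) <= 3 ^ b * (2 * a).
  have e1 : 3 ^ b * (12 * (g ^ 2 * T)) = 4 * g ^ 2 * (3 ^ b.+1 * T) by rewrite (expnS 3 b); move: (3 ^ b) (2 ^ b) (g ^ 2) => P Q G; nia.
  rewrite e1.
  apply: (@leq_trans (4 * g ^ 2 * (2 ^ b.+1 * (3 * a)))); first by rewrite leq_mul2l h1 orbT.
  have e2 : 4 * g ^ 2 * (2 ^ b.+1 * (3 * a)) = (12 * g ^ 2 * 2 ^ b) * (2 * a) by rewrite (expnS 2 b); move: (3 ^ b) (2 ^ b) (g ^ 2) => P Q G; nia.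
  by rewrite e2 leq_mul2r hb orbT.
rewrite leq_pmul2l ?expn_gt0 // in key.
have : 12 * Bd <= 12 * (g ^ 2 * T) by rewrite leq_mul2l h2.
lia.
Qed.

Section Main.
Variables (V E : finType) (ends : E -> V * V) (Sigma : eqType) (w : E -> seq Sigma)
  (gamma beta : nat) (r : V) (e0 : E).
Hypothesis hloop : loopless ends.

Definition conf (e g : E) : bool := has (fun s => s \in w g) (w e).

Lemma conf_sym e g : conf e g = conf g e.
Proof. exact: has_sym. Qed.

Record state : Type := St { sS : {set V}; sdep : V -> nat; spar : V -> E;
                           ssp : option (E * nat); slvl : nat }.

Definition pv st x := other ends (spar st x) x.

Definition frozen st t g : bool :=
  [exists x in sS st, (x != r) && (sdep st x + beta.+1 <= t) && (spar st x == g)] ||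
  (if ssp st is Some (f, d1) then (f == g) && (d1 + beta.+1 <= t) else false).

Definition good st t e : bool := [forall g, frozen st t g ==> ~~ conf e g].

Lemma frozen_mono st t t' g : t <= t' -> frozen st t g -> frozen st t' g.
Proof.
move=> h /orP [/existsP [x /andP [hx /andP [/andP [h1 h2] h3]]] | h'].
  by apply/orP; left; apply/existsP; exists x; rewrite hx h1 h3 (leq_trans h2 h).
apply/orP; right; move: h'; case: (ssp st) => // [[f d1]] /andP [-> h2].
by rewrite (leq_trans h2 h).
Qed.

Lemma good_mono st t t' e : t <= t' -> good st t' e -> good st t e.
Proof.
move=> h /forallP H; apply/forallP => g; apply/implyP => hf.
by have := H g; rewrite (frozen_mono h hf).
Qed.

Definition spec_ok st D f L : Prop :=
  [/\ L < D, good st L f,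
   (forall y, incident ends y f -> y \in sS st /\ L.-1 <= sdep st y <= L.+1),
   (forall x, x \in sS st -> x != r -> spar st x != f) &
   (forall t, L.-1 + beta.+2 <= t -> t < D -> frozen st t f)].

Definition tree_ok st D : Prop :=
  [/\ r \in sS st, sdep st r = 0,
   (forall x, x \in sS st -> sdep st x <= D),
   (forall x, x \in sS st -> x != r ->
      [/\ incident ends x (spar st x), pv st x \in sS st & (sdep st (pv st x)).+1 = sdep st x]) &
   (forall x, x \in sS st -> x != r -> good st (sdep st x).-1 (spar st x))].

Definition concl : Prop :=
  exists (V0 : {set V}) (E0 : {set E}) (B : seq {set V}),
    is_subgraph ends V0 E0 /\
        path_decomposition ends V0 E0 B /\
        width_at_most B (4 * (beta + 3)) /\
        #|E0| = #|V0| + 1 /\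
        3 ^ #|V0| * 2 ^ 8 <= 3 ^ 8 * 2 ^ #|V0| * #|V| ^ 4 /\
        (forall e1 e2, e1 \in E0 -> e2 \in E0 ->
           has (fun s => s \in w e2) (w e1) ->
           exists2 b, b \in B &
             (edge_ends_set ends e1 :|: edge_ends_set ends e2) \subset b) /\
        (forall e, e \in E0 -> indices_interval B (edge_ends_set ends e)).

Section Final.
Variables (st : state) (D : nat) (f1 f2 : E) (L1 L2 : nat).
Hypotheses (htree : tree_ok st D) (hs1 : spec_ok st D f1 L1) (hs2 : spec_ok st D f2 L2)
  (hf12 : f1 != f2) (hD : 0 < D) (hn : 3 ^ D.-1 <= 2 ^ D.-1 * #|V|).

Local Notation S := (sS st).
Local Notation dep := (sdep st).
Local Notation par := (spar st).

Lemma tr_r : r \in S. Proof. by case: htree. Qed.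
Lemma tr_dr : dep r = 0. Proof. by case: htree. Qed.
Lemma tr_D x : x \in S -> dep x <= D. Proof. by case: htree => _ _ H _ _; apply: H. Qed.
Lemma tr_par x : x \in S -> x != r ->
  [/\ incident ends x (par x), pv st x \in S & (dep (pv st x)).+1 = dep x].
Proof. by case: htree => _ _ _ H _; apply: H. Qed.
Lemma tr_good x : x \in S -> x != r -> good st (dep x).-1 (par x).
Proof. by case: htree => _ _ _ _ H; apply: H. Qed.

Lemma dep0_root x : x \in S -> dep x = 0 -> x = r.
Proof.
move=> hx h0; apply/eqP; apply/negPn/negP => hr.
have [_ _ h] := tr_par hx hr; by rewrite h0 in h.
Qed.

Lemma dep_pos x : x \in S -> x != r -> 0 < dep x.
Proof. by move=> hx hr; have [_ _ <-] := tr_par hx hr. Qed.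

Definition anc k x := iter k (pv st) x.

Lemma anc_prop t k : t \in S -> k <= dep t -> anc k t \in S /\ dep (anc k t) = dep t - k.
Proof.
move=> ht; elim: k => [|k IH] hk; first by rewrite subn0.
have [h1 h2] := IH (ltnW hk).
have hr : anc k t != r.
  apply/eqP => e; move: h2; rewrite e tr_dr; lia.
have [_ h3 h4] := tr_par h1 hr.
rewrite /anc iterS -/(anc k t); split=> //; lia.
Qed.

Lemma anc_top t : t \in S -> anc (dep t) t = r.
Proof.
move=> ht; have [h1 h2] := anc_prop ht (leqnn _); apply: dep0_root h1 _; lia.
Qed.

Definition ts := [:: (ends f1).1; (ends f1).2; (ends f2).1; (ends f2).2].
Definition tip (i : 'I_4) := nth r ts i.

Lemma spec_in f L y : spec_ok st D f L -> incident ends y f -> y \in S.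
Proof. by case=> _ _ H _ _ hy; case: (H y hy). Qed.

Lemma tip_S i : tip i \in S.
Proof.
case: i => [[|[|[|[|i]]]] hi] //=; rewrite /tip /=.
- exact: (spec_in hs1 (inc_ends1 _ _)).
- exact: (spec_in hs1 (inc_ends2 _ _)).
- exact: (spec_in hs2 (inc_ends1 _ _)).
- exact: (spec_in hs2 (inc_ends2 _ _)).
Qed.

Definition V0 : {set V} :=
  [set x | [exists i : 'I_4, exists k : 'I_D.+1, (k <= dep (tip i)) && (anc k (tip i) == x)]].

Lemma mkV0 i k : k <= dep (tip i) -> anc k (tip i) \in V0.
Proof.
move=> hk; rewrite inE; apply/existsP; exists i; apply/existsP.
have hkD : k < D.+1 by rewrite ltnS (leq_trans hk) // tr_D // tip_S.
by exists (Ordinal hkD); rewrite /= hk eqxx.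
Qed.

Lemma V0E x : x \in V0 -> exists i k, k <= dep (tip i) /\ anc k (tip i) = x.
Proof.
rewrite inE => /existsP [i /existsP [k /andP [h1 /eqP h2]]]; by exists i, k.
Qed.

Lemma V0_S x : x \in V0 -> x \in S.
Proof. by case/V0E => i [k [hk <-]]; case: (anc_prop (tip_S i) hk). Qed.

Lemma r_V0 : r \in V0.
Proof. rewrite -(anc_top (tip_S ord0)); exact: mkV0. Qed.

Lemma tip_V0 i : tip i \in V0.
Proof. exact: (mkV0 (k:=0)). Qed.

Lemma pv_V0 x : x \in V0 -> x != r -> pv st x \in V0.
Proof.
case/V0E => i [k [hk <-]] hr.
have hk' : k < dep (tip i).
  rewrite ltn_neqAle hk andbT; apply/eqP => e; move: hr; by rewrite e anc_top ?tip_S ?eqxx.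
by have := mkV0 hk'; rewrite /anc iterS.
Qed.

Lemma card_V0 : #|V0| <= 4 * D.+1.
Proof.
apply: (@leq_trans #|[set anc p.2 (tip p.1) | p : 'I_4 * 'I_D.+1]|).
  apply: subset_leq_card; apply/subsetP => x; rewrite inE.
  case/existsP => i /existsP [k /andP [_ /eqP <-]].
  by apply/imsetP; exists (i, k).
by apply: leq_trans (leq_imset_card _ _) _; rewrite card_prod !card_ord.
Qed.

Lemma par_inj x y : x \in S -> y \in S -> x != r -> y != r -> par x = par y -> x = y.
Proof.
move=> hx hy hxr hyr e; apply/eqP/negPn/negP => hxy.
have [ix _ dx] := tr_par hx hxr; have [iy _ dy] := tr_par hy hyr.
have e1 : y = pv st x.
  apply: (inc_two hloop ix) => //; by rewrite e.
have e2 : x = pv st y.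
  apply: (inc_two hloop iy); by rewrite -?e // eq_sym.
rewrite -e1 in dx; rewrite -e2 in dy; lia.
Qed.

Definition E0 : {set E} := par @: (V0 :\ r) :|: [set f1; f2].

Lemma spec_np f L x : spec_ok st D f L -> x \in S -> x != r -> par x != f.
Proof. by case=> _ _ _ H _; apply: H. Qed.

Lemma card_E0 : #|E0| = #|V0| + 1.
Proof.
rewrite /E0 cardsU.
have -> : par @: (V0 :\ r) :&: [set f1; f2] = set0.
  apply/setP => e; rewrite in_setI in_set2 in_set0; apply/negP => /andP [/imsetP [x]].
  rewrite in_setD1 => /andP [hxr hx] -> /orP [] /eqP; apply/eqP.
  - exact: spec_np hs1 (V0_S hx) hxr.
  - exact: spec_np hs2 (V0_S hx) hxr.
rewrite cards0 subn0 cards2 hf12 card_in_imset.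
  by rewrite (cardsD1 r V0) r_V0; lia.
move=> x y; rewrite !in_setD1 => /andP [hxr hx] /andP [hyr hy].
exact: par_inj (V0_S hx) (V0_S hy) hxr hyr.
Qed.

Definition lo e := if e == f1 then L1.-1 else if e == f2 then L2.-1
                   else minn (dep (ends e).1) (dep (ends e).2).
Definition hi e := if e == f1 then L1.+1 else if e == f2 then L2.+1
                   else maxn (dep (ends e).1) (dep (ends e).2).

Lemma inc_or y e : incident ends y e -> y = (ends e).1 \/ y = (ends e).2.
Proof. by case/orP => /eqP ->; [left|right]. Qed.

Lemma tips_f1 y : incident ends y f1 -> y \in V0.
Proof. by case/inc_or => ->; [exact: (tip_V0 (@Ordinal 4 0 isT)) | exact: (tip_V0 (@Ordinal 4 1 isT))]. Qed.
Lemma tips_f2 y : incident ends y f2 -> y \in V0.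
Proof. by case/inc_or => ->; [exact: (tip_V0 (@Ordinal 4 2 isT)) | exact: (tip_V0 (@Ordinal 4 3 isT))]. Qed.

Lemma E0_facts e : e \in E0 ->
  [/\ (forall y, incident ends y e -> y \in V0 /\ lo e <= dep y <= hi e),
      hi e <= lo e + 2,
      (exists l, [/\ l < D, good st l e & hi e <= l.+1]) &
      (forall t, lo e + beta.+2 <= t -> t < D -> frozen st t e)].
Proof.
rewrite /E0 in_setU in_set2 => /orP [/imsetP [x] | /orP [] /eqP ->].
- rewrite in_setD1 => /andP [hxr hx] ->.
  have hxS := V0_S hx.
  have [ix ipv dpv] := tr_par hxS hxr.
  have hn1 : par x != f1 by apply: spec_np hs1 hxS hxr.
  have hn2 : par x != f2 by apply: spec_np hs2 hxS hxr.
  have hy : forall y, incident ends y (par x) -> y \in V0 /\ (dep x).-1 <= dep y <= dep x.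
    move=> y hy; case: (eqVneq x y) => [<- | hxy]; first by split=> //; lia.
    have -> : y = pv st x := inc_two hloop ix hy hxy.
    split; [exact: pv_V0 | lia].
  have [h1 h1'] := hy _ (inc_ends1 ends (par x)).
  have [h2 h2'] := hy _ (inc_ends2 ends (par x)).
  rewrite /lo /hi (negbTE hn1) (negbTE hn2).
  split.
  + move=> y /[dup] /hy [hyV _] /inc_or [] ->; split=> //;
    by rewrite geq_minl leq_maxl || by rewrite geq_minr leq_maxr.
  + clear -h1' h2'; move: h1' h2'; move: (dep x) (dep (ends (par x)).1) (dep (ends (par x)).2).
    move=> k a b; lia.
  + exists (dep x).-1; split; [|exact: tr_good|]; have := tr_D hxS; have := dep_pos hxS hxr.
    * clear; move: (dep x) => k; lia.
    * clear -h1' h2'; move: h1' h2'; move: (dep x) (dep (ends (par x)).1) (dep (ends (par x)).2).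
      move=> k a b; lia.
  + move=> t ht _; apply/orP; left; apply/existsP; exists x.
    rewrite hxS hxr eqxx /= andbT; lia.
- case: hs1 => hL hg hy _ hfr.
  rewrite /lo /hi eqxx; split.
  + by move=> y hyi; split; [exact: tips_f1 | case: (hy y hyi)].
  + lia.
  + by exists L1; split.
  + exact: hfr.
- case: hs2 => hL hg hy _ hfr.
  rewrite /lo /hi eq_sym (negbTE hf12) eqxx; split.
  + by move=> y hyi; split; [exact: tips_f2 | case: (hy y hyi)].
  + lia.
  + by exists L2; split.
  + exact: hfr.
Qed.

Definition win j : {set V} := [set x in V0 | (j <= dep x) && (dep x <= j + beta.+2)].
Lemma in_win j x : (x \in win j) = (x \in V0) && ((j <= dep x) && (dep x <= j + beta.+2)).
Proof. exact: in_set. Qed.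

Definition Bs : seq {set V} := [seq win j | j <- iota 0 D.+1].

Lemma size_Bs : size Bs = D.+1.
Proof. by rewrite size_map size_iota. Qed.

Lemma nth_Bs j : j < D.+1 -> nth set0 Bs j = win j.
Proof. by move=> hj; rewrite (nth_map 0) ?size_iota // nth_iota. Qed.

Lemma win_in j : j <= D -> win j \in Bs.
Proof. by move=> hj; apply: map_f; rewrite mem_iota. Qed.

Lemma in_Bs b : b \in Bs -> exists2 j, j <= D & b = win j.
Proof. by case/mapP => j; rewrite mem_iota add0n ltnS => hj ->; exists j. Qed.

Lemma vint v : v \in V0 -> indices_interval Bs [set v].
Proof.
move=> hv i j k hij hjk hk; rewrite size_Bs in hk.
rewrite !sub1set !nth_Bs //; try (apply: leq_ltn_trans hk; lia).
rewrite !in_win hv /= => /andP [h1 h2] /andP [h3 h4].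
apply/andP; split; [exact: leq_trans hjk h3 | apply: leq_trans h2 _; lia].
Qed.

Lemma conf_bound e1 e2 : e1 \in E0 -> e2 \in E0 -> conf e1 e2 -> hi e1 <= lo e2 + beta.+2.
Proof.
move=> h1 h2 hc; rewrite leqNgt; apply/negP => hlt.
have [_ _ [l [hlD hg hl]] _] := E0_facts h1.
have [_ _ _ hfr] := E0_facts h2.
have hf : frozen st l e2 by apply: hfr => //; lia.
by move/forallP: hg => /(_ e2); rewrite hf hc.
Qed.

Lemma end_win e j y : e \in E0 -> incident ends y e -> j <= lo e -> hi e <= j + beta.+2 -> y \in win j.
Proof.
move=> he hy h1 h2; have [H _ _ _] := E0_facts he; have [hyV /andP [h3 h4]] := H y hy.
rewrite in_win hyV /= (leq_trans h1 h3) /=; exact: leq_trans h4 h2.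
Qed.

Lemma lo_D e : e \in E0 -> lo e <= D.
Proof.
move=> he; have [H _ _ _] := E0_facts he; have [hyV /andP [h3 _]] := H _ (inc_ends1 ends e).
exact: leq_trans h3 (tr_D (V0_S hyV)).
Qed.

Lemma final_concl : concl.
Proof.
exists V0, E0, Bs; split; [|split; [|split; [|split; [|split; [|split]]]]].
- move=> e he; have [H _ _ _] := E0_facts he.
  by rewrite (proj1 (H _ (inc_ends1 _ _))) (proj1 (H _ (inc_ends2 _ _))).
- split.
  + apply/setP => x; rewrite bigcup_seq; apply/bigcupP/idP.
    * by case=> b /in_Bs [j _ ->]; rewrite in_win => /andP [].
    * move=> hx; exists (win (dep x)); first exact: win_in (tr_D (V0_S hx)).
      by rewrite in_win hx leqnn leq_addr.
  + move=> e he; exists (win (lo e)); first exact: win_in (lo_D he).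
    have [_ h _ _] := E0_facts he.
    by rewrite !(end_win he) ?inc_ends1 ?inc_ends2 //; apply: leq_trans h _; rewrite leq_add2l.
  + exact: vint.
- move=> b /in_Bs [j _ ->].
  apply: (@leq_trans (4 * (beta + 3))); last exact: leqnSn.
  apply: (@leq_trans #|[set anc (dep (tip p.1) - (j + p.2)) (tip p.1) | p : 'I_4 * 'I_(beta + 3)]|).
    apply: subset_leq_card; apply/subsetP => x; rewrite in_win => /andP [hx /andP [h1 h2]].
    case/V0E: hx => i [k [hk ex]].
    have [_ hdx] := anc_prop (tip_S i) hk; rewrite ex in hdx.
    have hm : dep x - j < beta + 3 by lia.
    apply/imsetP; exists (i, Ordinal hm) => //=.
    rewrite -{1}ex; congr anc; lia.
  by apply: leq_trans (leq_imset_card _ _) _; rewrite card_prod !card_ord.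
- exact: card_E0.
- have hV := card_V0.
  move: hV; case: D hD hn => // d _ /= hn' hV.
  exact: bound_b hV hn'.
- move=> e1 e2 h1 h2 hc.
  have hc' : conf e1 e2 := hc.
  have hb1 := conf_bound h1 h2 hc'.
  have hb2 := conf_bound h2 h1 (etrans (conf_sym e2 e1) hc').
  have [_ hl1 _ _] := E0_facts h1.
  have [_ hl2 _ _] := E0_facts h2.
  exists (win (minn (lo e1) (lo e2))).
    apply: win_in; exact: leq_trans (geq_minl _ _) (lo_D h1).
  apply/subsetP => y; rewrite in_setU -!incidentE => /orP [] hy.
  + apply: end_win h1 hy _ _; first exact: geq_minl.
    rewrite /minn; case: ifP => _ //; apply: leq_trans hl1 _; by rewrite leq_add2l.
  + apply: end_win h2 hy _ _; first exact: geq_minr.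
    rewrite /minn; case: ifP => _ //; apply: leq_trans hl2 _; by rewrite leq_add2l.
- move=> e he i j k hij hjk hk; rewrite /edge_ends_set !subUset !sub1set => /andP [a1 a2] /andP [b1 b2].
  have [H _ _ _] := E0_facts he.
  have v1 := proj1 (H _ (inc_ends1 _ _)); have v2 := proj1 (H _ (inc_ends2 _ _)).
  have := vint v1 hij hjk hk; rewrite !sub1set => /(_ a1 b1) ->.
  by have := vint v2 hij hjk hk; rewrite !sub1set => /(_ a2 b2) ->.
Qed.

End Final.
End Main.

Section Proc.
Variables (V E : finType) (ends : E -> V * V) (Sigma : eqType) (w : E -> seq Sigma)
  (gamma beta : nat) (r : V) (e0 : E).
Hypothesis hloop : loopless ends.
Hypothesis hdeg : forall v, 3 <= degree ends v.
Hypothesis hwe : forall e, size (undup (w e)) <= gamma.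
Hypothesis hws : forall s : Sigma, #|[set e | s \in w e]| <= gamma.
Hypothesis hbeta : 12 * gamma ^ 2 * 2 ^ beta <= 3 ^ beta.
Hypothesis hgam : 1 <= gamma.

Local Notation state := (state V E).
Local Notation frozen := (frozen beta r).
Local Notation good := (good w beta r).
Local Notation pv := (pv ends).
Local Notation conf := (conf w).
Local Notation incident := (incident ends).
Local Notation other := (other ends).
Local Notation tree_ok := (tree_ok ends w beta r).
Local Notation spec_ok := (spec_ok ends w beta r).

Definition notpar (st : state) v e := (v == r) || (e != spar st v).
Definition lev (st : state) k := [set x in sS st | sdep st x == k].
Definition cum (st : state) m := [set x in sS st | sdep st x <= m].
Definition Rb (st : state) : nat :=
  if ssp st is Some (f, _) then 2 - #|[set x in sS st | incident x f & sdep st x < slvl st]| else 2.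

Lemma in_lev (st : state) k x : (x \in lev st k) = (x \in sS st) && (sdep st x == k).
Proof. by rewrite /lev inE. Qed.
Lemma in_cum (st : state) k x : (x \in cum st k) = (x \in sS st) && (sdep st x <= k).
Proof. by rewrite /cum inE. Qed.

Definition inv (st : state) : Prop :=
 [/\ tree_ok st (slvl st),
     (if ssp st is Some (f, d1) then spec_ok st (slvl st) f d1 else True),
     (forall u e, u \in sS st -> sdep st u < slvl st -> incident u e -> notpar st u e ->
        good st (sdep st u) e -> other e u \in sS st /\ sdep st (other e u) <= (sdep st u).+1),
     (forall m, m <= slvl st -> 3 ^ (slvl st - m) * #|cum st m| + 2 ^ (slvl st - m) * Rb st
                               <= 2 ^ (slvl st - m) * (3 * #|lev st (slvl st)|)) &
     3 ^ slvl st <= 2 ^ slvl st * #|cum st (slvl st)|].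

Lemma conf_card g : #|[set e | conf e g]| <= gamma ^ 2.
Proof.
apply: (@leq_trans #|\bigcup_(s <- undup (w g)) [set e | s \in w e]|).
  apply: subset_leq_card; apply/subsetP => e; rewrite inE => /hasP [s hs hsg].
  by rewrite (big_rem s) ?mem_undup //= in_setU inE hs.
apply: leq_trans (card_bigcup_seq_le _ _) _.
apply: (@leq_trans (\sum_(s <- undup (w g)) gamma)); first exact: leq_sum.
by rewrite big_const_seq count_predT iter_addn_0 (expnS gamma 1) expn1 leq_mul2l hwe orbT.
Qed.

Section Step.
Variables (st : state) (d : nat).
Hypotheses (hinv : inv st) (hd : slvl st = d).

Local Notation S := (sS st).
Local Notation dep := (sdep st).
Local Notation par := (spar st).

Lemma i_tree : tree_ok st d. Proof. by case: hinv; rewrite hd. Qed.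
Lemma i_r : r \in S. Proof. by case: i_tree. Qed.
Lemma i_dr : dep r = 0. Proof. by case: i_tree. Qed.
Lemma i_D x : x \in S -> dep x <= d. Proof. by case: i_tree => _ _ H _ _; apply: H. Qed.
Lemma i_par x : x \in S -> x != r ->
  [/\ incident x (par x), pv st x \in S & (dep (pv st x)).+1 = dep x].
Proof. by case: i_tree => _ _ _ H _; apply: H. Qed.
Lemma i_good x : x \in S -> x != r -> good st (dep x).-1 (par x).
Proof. by case: i_tree => _ _ _ _ H; apply: H. Qed.
Lemma i_sp : if ssp st is Some (f, d1) then spec_ok st d f d1 else True.
Proof. by case: hinv; rewrite hd. Qed.
Lemma i_proc u e : u \in S -> dep u < d -> incident u e -> notpar st u e ->
  good st (dep u) e -> other e u \in S /\ dep (other e u) <= (dep u).+1.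
Proof. by case: hinv; rewrite hd => _ _ H _ _; apply: H. Qed.
Lemma i_H m : m <= d -> 3 ^ (d - m) * #|cum st m| + 2 ^ (d - m) * Rb st
                               <= 2 ^ (d - m) * (3 * #|lev st d|).
Proof. by case: hinv; rewrite hd => _ _ _ H _; apply: H. Qed.
Lemma i_C : 3 ^ d <= 2 ^ d * #|cum st d|.
Proof. by case: hinv; rewrite hd. Qed.

Definition Sl : {set V * E} :=
  [set p : V * E | (p.1 \in S) && (dep p.1 == d) && incident p.1 p.2 && notpar st p.1 p.2].
Definition GSl : {set V * E} := Sl :&: [set p | good st d p.2].
Definition BSl : {set V * E} := Sl :\: [set p | good st d p.2].
Definition tgt (p : V * E) := other p.2 p.1.
Definition New : {set V} := [set x | (x \notin S) && [exists p in GSl, tgt p == x]].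
Definition npar x := odflt e0 [pick e | [exists v, ((v, e) \in GSl) && (other e v == x)]].
Definition S' := S :|: New.
Definition dep' x := if x \in S then dep x else d.+1.
Definition par' x := if x \in S then par x else npar x.
Definition chosen (p : V * E) := (tgt p \notin S) && (npar (tgt p) == p.2).
Definition Nonch : {set E} := [set e | [exists p in GSl, (p.2 == e) && ~~ chosen p]].
Definition sp' := if ssp st is Some _ then ssp st else omap (fun f => (f, d)) [pick f in Nonch].
Definition st' : state := St S' dep' par' sp' d.+1.

Lemma GSlP p : p \in GSl ->
  [/\ p.1 \in S, dep p.1 = d, incident p.1 p.2, notpar st p.1 p.2 & good st d p.2].
Proof. by rewrite !inE => /andP [/andP [/andP [/andP [-> /eqP ->] ->] ->] ->]. Qed.

Lemma NewP x : x \in New ->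
  x \notin S /\ exists2 v, (v, npar x) \in GSl & other (npar x) v = x.
Proof.
rewrite inE => /andP [hx /existsP [p /andP [hp /eqP ht]]]; split=> //.
rewrite /npar; case: pickP => [e /existsP [v /andP [hv /eqP hvx]] | H] /=.
  by exists v.
have := H p.2; move/negbT/existsPn/(_ p.1); rewrite -surjective_pairing hp /= -ht /tgt eqxx.
done.
Qed.


Lemma S_S' x : x \in S -> x \in S'.
Proof. by rewrite inE => ->. Qed.

Lemma S'P x : x \in S' -> x \in S \/ x \in New.
Proof. by rewrite inE => /orP. Qed.

Lemma dep'S x : x \in S -> dep' x = dep x.
Proof. by rewrite /dep' => ->. Qed.
Lemma par'S x : x \in S -> par' x = par x.
Proof. by rewrite /par' => ->. Qed.
Lemma dep'N x : x \in New -> dep' x = d.+1.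
Proof. by case/NewP => hx _; rewrite /dep' (negbTE hx). Qed.
Lemma par'N x : x \in New -> par' x = npar x.
Proof. by case/NewP => hx _; rewrite /par' (negbTE hx). Qed.

Lemma tgt_inc p : p \in GSl -> incident (tgt p) p.2.
Proof. by case/GSlP => _ _ hi _ _; exact: other_inc. Qed.

Lemma tgt_S' p : p \in GSl -> tgt p \in S'.
Proof.
move=> hp; rewrite inE; case: (boolP (tgt p \in S)) => //= hn.
by rewrite inE hn /=; apply/existsP; exists p; rewrite hp eqxx.
Qed.

Lemma tgt_low p : p \in GSl -> tgt p \in S -> d.-1 <= dep (tgt p).
Proof.
move=> hp hu; case/GSlP: (hp) => h1 h2 h3 h4 h5.
rewrite leqNgt; apply/negP => hlt.
have hinc : incident (tgt p) p.2 := tgt_inc hp.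
have hdu : dep (tgt p) < d by lia.
have hnp : notpar st (tgt p) p.2.
  rewrite /notpar; case: eqP => //= /eqP hr; apply/eqP => he.
  have [_ _ hdp] := i_par hu hr.
  have : pv st (tgt p) = p.1 by rewrite /pv -he /tgt other_invol.
  move=> e; rewrite e h2 in hdp; lia.
have hg : good st (dep (tgt p)) p.2 by apply: good_mono h5; lia.
have [_ hle] := i_proc hu hdu hinc hnp hg.
by move: hle; rewrite /tgt other_invol // -/(tgt p) h2; lia.
Qed.

Lemma frozen_eq t g : t <= d -> frozen st' t g = frozen st t g.
Proof.
move=> ht; rewrite /frozen /=; congr orb.
  apply/existsP/existsP => [[x] | [x]].
    case/andP => hx /andP [/andP [hr h1] h2].
    have hxS : x \in S.
      case/S'P: hx => // hN; rewrite dep'N // in h1; lia.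
    by exists x; rewrite hxS hr -(dep'S hxS) h1 -(par'S hxS) h2.
  case/andP => hx /andP [/andP [hr h1] h2].
  by exists x; rewrite S_S' // hr dep'S // h1 par'S.
rewrite /sp'; case: (ssp st) => // .
case: pickP => //= f _; apply/negbTE; rewrite negb_and; apply/orP; right; lia.
Qed.

Lemma good_eq t e : t <= d -> good st' t e = good st t e.
Proof.
move=> ht; apply: eq_forallb => g; by rewrite frozen_eq.
Qed.


Lemma New_notS x : x \in New -> x \notin S.
Proof. by case/NewP. Qed.

Lemma npar_inc x : x \in New -> incident x (npar x).
Proof.
case/NewP => _ [v hv hvx]; rewrite -{1}hvx; apply: other_inc; by case/GSlP: hv.
Qed.

Lemma tree' : tree_ok st' d.+1.
Proof.
split => /=.
- exact: S_S' i_r.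
- by rewrite dep'S ?i_r // i_dr.
- move=> x /S'P [hx | hx]; first by rewrite dep'S // ltnW // ltnS i_D.
  by rewrite dep'N.
- move=> x /S'P [hx | hx] hr.
    have [h1 h2 h3] := i_par hx hr.
    by rewrite /pv /= par'S // -/(pv st x) h1 S_S' // !dep'S.
  case/NewP: (hx) => hxn [v hv hvx].
  have [hvS hvd hvi _ _] := GSlP hv.
  have ev : other (npar x) x = v.
    by rewrite -[X in other _ X]hvx other_invol.
  rewrite /pv /= par'N // npar_inc // ev.
  by rewrite S_S' // dep'S // hvd dep'N.
- move=> x /S'P [hx | hx] hr /=.
    rewrite dep'S // par'S // good_eq ?i_good //; have := i_D hx; lia.
  rewrite dep'N // par'N // good_eq //.
  by case/NewP: hx => _ [v hv _]; case/GSlP: hv.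
Qed.

Lemma Nonch_spec e : e \in Nonch -> spec_ok st' d.+1 e d.
Proof.
rewrite inE => /existsP [p /andP [hp /andP [/eqP hpe hnc]]].
have [hvS hvd hvi hnp hg] := GSlP hp.
rewrite -hpe; split => //=.
- by rewrite good_eq.
- move=> y hy /=.
  case: (eqVneq p.1 y) => [<- | hne].
    by rewrite S_S' // dep'S // hvd; split=> //; lia.
  have ey : y = tgt p := inc_two hloop hvi hy hne.
  rewrite ey; split; first exact: tgt_S'.
  case: (boolP (tgt p \in S)) => hu.
    rewrite dep'S //; have := tgt_low hp hu; have := i_D hu; lia.
  by rewrite /dep' (negbTE hu); lia.
- move=> x /S'P [hx | hx] hr /=.
    rewrite par'S //; apply/eqP => he.
    have [hxi _ hdx] := i_par hx hr.
    case: (eqVneq p.1 x) => [ex | hne].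
      by move: hnp; rewrite /notpar ex (negbTE hr) he eqxx.
    have hvi' : incident p.1 (par x) by rewrite he.
    have hne' : x != p.1 by rewrite eq_sym.
    have ev : p.1 = pv st x := inc_two hloop hxi hvi' hne'.
    rewrite -ev hvd in hdx; have := i_D hx; lia.
  rewrite par'N //; apply/eqP => he.
  case/NewP: (hx) => hxn [v' hv' hv'x].
  rewrite he in hv' hv'x.
  have hv'i : incident v' p.2 by case/GSlP: hv'.
  have hx_i : incident x p.2 by rewrite -hv'x other_inc.
  have hne : x != p.1 by apply/eqP => ex; move: hxn; rewrite ex hvS.
  have e1 : p.1 = other p.2 x := inc_two hloop hx_i hvi hne.
  have e2 : p.1 = v' by rewrite e1 -hv'x other_invol.
  move: hnc; rewrite /chosen /tgt e2 hv'x hxn /=.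
  by rewrite -he eqxx.
- move=> t ht1 ht2; exfalso; lia.
Qed.


Lemma old_spec f d1 : ssp st = Some (f, d1) -> spec_ok st' d.+1 f d1.
Proof.
move=> hsp; have := i_sp; rewrite hsp => -[h1 h2 h3 h4 h5].
split => //=.
- exact: ltnW.
- by rewrite good_eq // ltnW.
- move=> y hy; have [hyS hyd] := h3 y hy; by rewrite S_S' // dep'S.
- move=> x /S'P [hx | hx] hr; first by rewrite par'S // h4.
  rewrite par'N //; apply/eqP => he.
  have := npar_inc hx; rewrite he => /h3 [hxS _].
  by move: (New_notS hx); rewrite hxS.
- move=> t ht _; have hsp' : sp' = Some (f, d1) by rewrite /sp' hsp.
  apply/orP; right; rewrite /= hsp' eqxx /=; lia.
Qed.

Lemma hn_d : 3 ^ d <= 2 ^ d * #|V|.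
Proof. apply: leq_trans i_C _; by rewrite leq_mul2l max_card orbT. Qed.

Lemma stop_case :
  ~~ [forall e in Nonch, if sp' is Some (f, _) then e == f else false] -> concl ends w beta.
Proof.
move/forallPn => [e]; rewrite negb_imply => /andP [he hne].
case hsp : (ssp st) => [[f1 d1]|].
  have hsp' : sp' = Some (f1, d1) by rewrite /sp' hsp.
  rewrite hsp' in hne.
  apply: (final_concl hloop tree' (old_spec hsp) (Nonch_spec he)) => //.
  - by rewrite eq_sym.
  - exact: hn_d.
have hsp' : sp' = omap (fun f => (f, d)) [pick f in Nonch] by rewrite /sp' hsp.
move: hsp' hne; case: pickP => [f hf | H] /= ->; last by rewrite H in he.
move=> hne.
apply: (final_concl hloop tree' (Nonch_spec hf) (Nonch_spec he)) => //.
- by rewrite eq_sym.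
- exact: hn_d.
Qed.


Lemma card_inc_sub (A : {set V}) f : {subset A <= [pred y | incident y f]} -> #|A| <= 2.
Proof.
move=> H; apply: leq_trans (_ : #|edge_ends_set ends f| <= 2).
  apply: subset_leq_card; apply/subsetP => y /H; rewrite inE -incidentE; exact.
rewrite /edge_ends_set cardsU !cards1; exact: leq_subr.
Qed.

Lemma c1 : #|lev st d| * 2 <= #|Sl|.
Proof.
apply: card_pairs_ge => v; rewrite inE => /andP [hv /eqP hvd].
set A := [set e | incident v e] :\ par v.
have hA : 2 <= #|A|.
  have := hdeg v; rewrite /degree (cardsD1 (par v)) /A.
  case: (par v \in _) => /=; lia.
apply: leq_trans hA _.
have pinj : injective (fun e : E => (v, e)) by move=> a b [].
rewrite -(card_imset _ pinj).
apply: subset_leq_card; apply/subsetP => p /imsetP [e]; rewrite !inE => /andP [hne hi] ->.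
by rewrite /= hv hvd eqxx hi /notpar hne orbT eqxx.
Qed.

Lemma c2 : #|Sl| = #|GSl| + #|BSl|.
Proof. by rewrite /GSl /BSl cardsID. Qed.

Definition Bad : {set E} := [set e | ~~ good st d e].
Definition Fz : {set E} := [set g | frozen st d g].

Lemma c3 : #|BSl| <= 2 * #|Bad|.
Proof.
apply: (@leq_trans #|[set ((ends e).1, e) | e in Bad] :|: [set ((ends e).2, e) | e in Bad]|).
  apply: subset_leq_card; apply/subsetP => p; rewrite !inE => /andP [hg].
  case/andP => /andP [/andP [_ _] hi] _.
  have hb : p.2 \in Bad by rewrite inE hg.
  case/orP: hi => /eqP hi; apply/orP; [left|right]; apply/imsetP; exists p.2 => //;
    by rewrite hi -surjective_pairing.
apply: leq_trans (leq_card_setU _ _) _.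
by rewrite mul2n -addnn leq_add // leq_imset_card.
Qed.

Lemma c4 : #|Bad| <= gamma ^ 2 * #|Fz|.
Proof.
apply: (@leq_trans #|\bigcup_(g in Fz) [set e | conf e g]|).
  apply: subset_leq_card; apply/subsetP => e; rewrite inE => /forallPn [g].
  rewrite negb_imply negbK => /andP [hf hc]; apply/bigcupP; exists g; by rewrite inE.
apply: leq_trans (card_bigcup_le _ _) _.
rewrite mulnC -sum_nat_const; apply: leq_sum => g _; exact: conf_card.
Qed.

Lemma c5 : #|Fz| <= (if beta.+1 <= d then #|cum st (d - beta.+1)| else 0).
Proof.
set m := d - beta.+1.
set A := [set x in S | (x != r) && (dep x + beta.+1 <= d)].
set Bsp : {set E} := if ssp st is Some (f, d1) then (if d1 + beta.+1 <= d then [set f] else set0) else set0.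
have h1 : Fz \subset par @: A :|: Bsp.
  apply/subsetP => g; rewrite inE => /orP [/existsP [x /andP [hx /andP [/andP [hr h] /eqP <-]]] | hs].
    by rewrite in_setU; apply/orP; left; apply/imsetP; exists x => //; rewrite inE hx hr h.
  rewrite in_setU; apply/orP; right; move: hs; rewrite /Bsp; case: (ssp st) => // [[f d1]].
  by case/andP => /eqP -> ->; rewrite inE.
have h2 : #|Bsp| <= (if beta.+1 <= d then 1 else 0).
  rewrite /Bsp; case: (ssp st) => [[f d1]|]; last by rewrite cards0.
  case: ifP => h; last by rewrite cards0.
  rewrite cards1; case: ifP => //; lia.
have h3 : #|A| + (beta.+1 <= d) <= (if beta.+1 <= d then #|cum st m| else 0).
  case: ifP => hb.
    have hsub : r |: A \subset cum st m.
      apply/subsetP => x; rewrite !inE => /orP [/eqP -> | /andP [hx /andP [_ h]]].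
        by rewrite i_r i_dr.
      rewrite hx /=; rewrite /m; lia.
    have := subset_leq_card hsub; rewrite cardsU1.
    have -> : r \notin A by rewrite inE eqxx andbF.
    by rewrite addnC.
  have -> : A = set0.
    apply/setP => x; rewrite !inE; apply/negP => /andP [_ /andP [_ h]]; move/negbT: hb; lia.
  by rewrite cards0.
apply: leq_trans (subset_leq_card h1) _.
apply: leq_trans (leq_card_setU _ _) _.
apply: leq_trans (leq_add (leq_imset_card _ _) h2) _.
by move: h3; case: ifP.
Qed.


Definition Ch : {set V * E} := GSl :&: [set p | chosen p].
Definition Rest : {set V * E} := GSl :\: [set p | chosen p].

Lemma c6 : #|GSl| = #|Ch| + #|Rest|.
Proof. by rewrite /Ch /Rest cardsID. Qed.

Lemma c7 : #|Ch| <= #|New|.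
Proof.
have hinj : {in Ch &, injective tgt}.
  move=> p q /setIP [hp hpc] /setIP [hq hqc] e.
  have hpc' : chosen p by move: hpc; rewrite inE.
  have hqc' : chosen q by move: hqc; rewrite inE.
  move: hpc' hqc' {hpc hqc}; rewrite /chosen => /andP [_ /eqP hpc] /andP [_ /eqP hqc].
  have e2 : p.2 = q.2 by rewrite -hpc -hqc e.
  have hpi : incident p.1 p.2 by case/GSlP: hp.
  have hqi : incident q.1 q.2 by case/GSlP: hq.
  have e1 : p.1 = q.1.
    by rewrite -(other_invol hloop hpi) -(other_invol hloop hqi) -/(tgt p) -/(tgt q) e e2.
  by case: p q e1 e2 {hp hq hpc hqc e hpi hqi} => [a b] [a' b'] /= -> ->.
rewrite -(card_in_imset hinj); apply: subset_leq_card; apply/subsetP => x /imsetP [p].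
case/setIP => hp; rewrite inE => /andP [hn _] ->.
by rewrite inE hn /=; apply/existsP; exists p; rewrite hp eqxx.
Qed.

Lemma Rest_Nonch p : p \in Rest -> p.2 \in Nonch.
Proof.
case/setDP => hp hc; rewrite inE; apply/existsP; exists p.
by rewrite hp eqxx; rewrite inE in hc.
Qed.

Definition Yd f : {set V} := [set y in S | incident y f & dep y == d].
Definition Zd f : {set V} := [set y in S | incident y f & dep y < d].

Section Ok.
Hypothesis hok : [forall e in Nonch, if sp' is Some (f, _) then e == f else false].

Lemma Rest_bound : if sp' is Some (f, _) then #|Rest| <= #|Yd f| else #|Rest| == 0.
Proof.
case hsp : sp' => [[f d1]|].
  apply: (@leq_trans #|[set (y, f) | y in Yd f]|); last exact: leq_imset_card.
  apply: subset_leq_card; apply/subsetP => p hp.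
  have := forallP hok p.2; rewrite (Rest_Nonch hp) hsp /= => /eqP e.
  move: hp; case/setDP => hp _; have [h1 h2 h3 _ _] := GSlP hp.
  apply/imsetP; exists p.1; first by rewrite inE h1 -e h3 h2 eqxx.
  by rewrite -e -surjective_pairing.
rewrite cards_eq0; apply/eqP/setP => p; rewrite in_set0; apply/negbTE/negP => hp.
by have := forallP hok p.2; rewrite (Rest_Nonch hp) hsp.
Qed.

Lemma R_rel : #|Rest| + Rb st' <= Rb st /\ #|Rest| <= #|lev st d| /\ #|Rest| <= 2.
Proof.
have RB := Rest_bound.
case hsp : sp' RB => [[f d1]|] hR; last first.
  have h1 : Rb st' = 2 by rewrite /Rb /= hsp.
  have h2 : Rb st = 2.
    by move: hsp; rewrite /Rb /sp'; case: (ssp st).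
  rewrite (eqP hR) h1 h2; split=> //.
set Z' := [set x in S' | incident x f & dep' x < d.+1].
have hY : #|Yd f| <= #|lev st d|.
  apply: subset_leq_card; apply/subsetP => y; rewrite !inE => /andP [-> /andP [_ ->]].
  done.
have hY2 : #|Yd f| <= 2.
  by apply: (card_inc_sub (f:=f)) => y; rewrite !inE => /andP [_ /andP [? _]].
have hZ2 : #|Z'| <= 2.
  by apply: (card_inc_sub (f:=f)) => y; rewrite !inE => /andP [_ /andP [? _]].
have hZY : #|Yd f| + #|Zd f| <= #|Z'|.
  have hdis : Yd f :&: Zd f = set0.
    apply/setP => y; rewrite !inE; apply/negP => /andP [/andP [_ /andP [_ /eqP ->]] /andP [_ /andP [_]]].
    by rewrite ltnn.
  have := cardsU (Yd f) (Zd f); rewrite hdis cards0 subn0 => <-.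
  apply: subset_leq_card; apply/subsetP => y; rewrite in_setU !inE.
  case/orP => /andP [hy /andP [hi hdy]]; rewrite hy /= hi /= dep'S //.
    by rewrite (eqP hdy).
  exact: ltnW.
have hRb' : Rb st' = 2 - #|Z'| by rewrite /Rb /= hsp.
have hRb : Rb st = 2 - #|Zd f| \/ Rb st = 2.
  move: hsp; rewrite /Rb /sp'; case: (ssp st) => [[f' d']|] /=; last by right.
  by move=> [-> _]; left; rewrite hd.
rewrite hRb'; split; last by split; lia.
case: hRb => ->; lia.
Qed.

Lemma count_main : 3 * #|lev st d| + Rb st' <= 2 * #|New| + Rb st.
Proof.
have h1 := c1; have h2 := c2; have h3 := c3; have h4 := c4; have h5 := c5.
have h6 := c6; have h7 := c7; have [h8 [h9 h10]] := R_rel.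
suff hb : #|Rest| + 4 * #|Bad| <= #|lev st d| by lia.
case: (posnP #|Bad|) => hB; first by rewrite hB muln0 addn0.
have hbd : beta.+1 <= d.
  case: ifP h5 => // _; rewrite leqn0 => /eqP hF; move: h4; rewrite hF muln0; lia.
rewrite hbd in h5.
apply: (arith_phase2 (T := #|cum st (d - beta.+1)|) (g := gamma) (b := beta) (d := d)) => //.
- have := i_H (leq_subr (beta.+1) d); rewrite subKn //; lia.
- by apply: leq_trans h4 _; rewrite leq_mul2l h5 orbT.
- have := i_H (leq0n d); rewrite subn0.
  have : 0 < #|cum st 0| by apply/card_gt0P; exists r; rewrite inE i_r i_dr.
  nia.
Qed.


Lemma lev'_top : lev st' d.+1 = New.
Proof.
apply/setP => x; rewrite in_lev /= in_setU.
case: (boolP (x \in S)) => hx /=.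
  rewrite dep'S //; have := i_D hx; have hn : x \notin New by apply/negP => /New_notS; rewrite hx.
  rewrite (negbTE hn); case: eqP => //; lia.
by rewrite /dep' (negbTE hx) eqxx andbT.
Qed.

Lemma cum'_eq m : m <= d -> cum st' m = cum st m.
Proof.
move=> hm; apply/setP => x; rewrite !in_cum /= in_setU.
case: (boolP (x \in S)) => hx /=; first by rewrite dep'S.
rewrite /dep' (negbTE hx); apply/negP => /andP [_ h]; lia.
Qed.

Lemma cum'_top : #|cum st' d.+1| = #|cum st d| + #|New|.
Proof.
have -> : cum st' d.+1 = S'.
  apply/setP => x; rewrite in_cum /=; case: (boolP (x \in S')) => //= hx.
  case/S'P: hx => hx; first by rewrite dep'S // (leq_trans (i_D hx)).
  by rewrite dep'N // leqnn.
have -> : cum st d = S.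
  apply/setP => x; rewrite in_cum; case: (boolP (x \in S)) => // hx; by rewrite i_D.
rewrite /S' cardsU.
have -> : S :&: New = set0.
  apply/setP => x; rewrite in_setI in_set0; apply/negP => /andP [hx /New_notS]; by rewrite hx.
by rewrite cards0 subn0.
Qed.

Lemma inv_next : inv st'.
Proof.
have hc := count_main.
have hHd := i_H (leqnn d); rewrite subnn !expn0 !mul1n in hHd.
split.
- exact: tree'.
- rewrite /= /sp'; case hs : (ssp st) => [[f d1]|]; first exact: old_spec.
  case: pickP => //= f hf; exact: Nonch_spec.
- move=> u e /= /S'P [hu | hu]; last by rewrite dep'N // ltnn.
  rewrite dep'S // => hdu hi; rewrite /notpar /= par'S // => hnp.
  rewrite good_eq; last by rewrite -ltnS.
  move=> hg.
  case: (ltngtP (dep u) d) => hud.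
  + have [h1 h2] := i_proc hu hud hi hnp hg.
    by rewrite S_S' // dep'S.
  + by have := i_D hu; lia.
  + have hp : (u, e) \in GSl.
      apply/setIP; split; last by rewrite inE /= -hud. by rewrite inE /= hu hud eqxx hi /notpar hnp.
    split; first exact: (tgt_S' hp).
    rewrite /dep'; case: ifP => h; last by rewrite hud.
    by rewrite hud ltnW // ltnS i_D.
- move=> m /=; rewrite lev'_top => hm.
  case: (eqVneq m d.+1) => [-> | hne].
    rewrite subnn !expn0 !mul1n cum'_top; lia.
  have hmd : m <= d by lia.
  rewrite cum'_eq // subSn // !expnS.
  have := i_H hmd; move: (3 ^ (d - m)) (2 ^ (d - m)) => X Y h.
  have := arith_I7 h hc; rewrite mulnA [2 * Y * _]mulnAC; nia.
- rewrite /= cum'_top !expnS.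
  have := i_C; move: (3 ^ d) (2 ^ d) => X Y h.
  have h2 : #|cum st d| <= 2 * #|New| by lia.
  have := arith_I8 h h2; nia.
Qed.

End Ok.

Lemma step : concl ends w beta \/ exists st2, inv st2 /\ slvl st2 = d.+1.
Proof.
case: (boolP [forall e in Nonch, if sp' is Some (f, _) then e == f else false]) => hok.
  by right; exists st'; split; [exact: inv_next | ].
left; exact: stop_case.
Qed.

End Step.

Lemma cum_set1 k : cum (St [set r] (fun _ => 0) (fun _ => e0) None 0) k = [set r].
Proof. by apply/setP => x; rewrite in_cum /= andbT. Qed.
Lemma lev_set1 : lev (St [set r] (fun _ => 0) (fun _ => e0) None 0) 0 = [set r].
Proof. by apply/setP => x; rewrite in_lev /= andbT. Qed.

Lemma inv0 : inv (St [set r] (fun _ => 0) (fun _ => e0) None 0).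
Proof.
split => //=.
- split => //=; first by rewrite inE.
  by move=> x; rewrite inE => /eqP ->; rewrite eqxx.
  by move=> x; rewrite inE => /eqP ->; rewrite eqxx.
- move=> m; rewrite leqn0 => /eqP ->; rewrite cum_set1 lev_set1 cards1.
  by rewrite /Rb.
- by rewrite cum_set1 cards1.
Qed.

Lemma reach d : concl ends w beta \/ exists st, inv st /\ slvl st = d.
Proof.
elim: d => [|d [IH | [st [hst hd]]]]; first by right; exists (St [set r] (fun _ => 0) (fun _ => e0) None 0); split; [exact: inv0|].
- by left.
- exact: step hst hd.
Qed.

Lemma main_concl : 0 < #|V| -> concl ends w beta.
Proof.
move=> hV.
case: (reach #|V|) => // [[st [hst hd]]].
have := i_C hst hd.
have : #|cum st #|V| | <= #|V| := max_card _.
have := n_lt_pow hV.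
move: (3 ^ #|V|) (2 ^ #|V|) => X Y h1 h2 h3.
have : Y * #|cum st #|V| | <= Y * #|V| by rewrite leq_mul2l h2 orbT.
lia.
Qed.

End Proc.

Theorem corollary6 (V E : finType) (ends : E -> V * V)
  (Sigma : eqType) (w : E -> seq Sigma) (gamma : nat) (beta : nat) :
  loopless ends ->
  0 < #|V| ->
  (forall v : V, 3 <= degree ends v) ->
  1 <= gamma ->
  (forall e, size (undup (w e)) <= gamma) ->
  (forall s : Sigma, #|[set e | s \in w e]| <= gamma) ->
  (* beta = ceil(log_{3/2}(12 gamma^2)), i.e. the least b with (3/2)^b >= 12 gamma^2 *)
  12 * gamma ^ 2 * 2 ^ beta <= 3 ^ beta ->
  (forall b, 12 * gamma ^ 2 * 2 ^ b <= 3 ^ b -> beta <= b) ->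
  exists (V0 : {set V}) (E0 : {set E}) (B : seq {set V}),
    is_subgraph ends V0 E0 /\
        path_decomposition ends V0 E0 B /\
        width_at_most B (4 * (beta + 3)) /\
        (* (a) *) #|E0| = #|V0| + 1 /\
        (* (b) |V0| <= 4 (log_{3/2} n + 2)  <=>  (3/2)^|V0| <= (3/2)^8 n^4 *)
        3 ^ #|V0| * 2 ^ 8 <= 3 ^ 8 * 2 ^ #|V0| * #|V| ^ 4 /\
        (* (c) *)
        (forall e1 e2, e1 \in E0 -> e2 \in E0 ->
           has (fun s => s \in w e2) (w e1) ->
           exists2 b, b \in B &
             (edge_ends_set ends e1 :|: edge_ends_set ends e2) \subset b) /\
        (* (d) *)
        (forall e, e \in E0 -> indices_interval B (edge_ends_set ends e)).
Proof.
move=> hloop hV hdeg hgam hwe hws hbeta _.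
case/card_gt0P: (hV) => r _.
have : 0 < degree ends r by apply: leq_trans (hdeg r).
rewrite /degree => /card_gt0P [e0 _].
exact: (main_concl r e0 hloop hdeg hwe hws hbeta hgam hV).
Qed.
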